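(* Let $\beta>0$ and $M\ge1$. Every solution $\mathbf{p}\in\mathbb{R}^M$ of the system $$\mathbf{p}=\big\langle \mathbf{s}\,\tanh(\beta\,\mathbf{s}\cdot\mathbf{p})\big\rangle_{\mathbf{s}}$$ has all components equal: $p^\mu=p^\nu$ for all $\mu,\nu\in\{1,\dots,M\}$.
   Context: $m_0(\beta):=\lim_{h\to0^+}m_0(\beta,h)$, where $m_0(\beta,h)$ is the unique solution of $m=\tanh(\beta m+h)$ for $h>0$; equivalently $m_0(\beta)$ is the largest nonnegative solution of $m=\tanh(\beta m)$ (so $m_0(\beta)=0$ for $\beta\le1$ and $m_0(\beta)>0$ for $\beta>1$). $\langle\cdot\rangle_{\mathbf{s}}$ denotes expectation over $\mathbf{s}\in\{-1,1\}^M$ with i.i.d. entries of mean $m_0(\beta)$, i.e. weight $e^{\beta m_0\sum_\mu s_\mu}/(2\cosh(\beta m_0))^M$. *)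

(* Defs.v *)
From HB Require Import structures.
From mathcomp Require Import all_boot all_order all_algebra.
From mathcomp Require Import all_classical all_reals all_analysis.
Set Implicit Arguments. Unset Strict Implicit. Unset Printing Implicit Defensive.
Import Order.TTheory GRing.Theory Num.Theory.
Local Open Scope classical_set_scope.
Local Open Scope ring_scope.

Definition coshR {R : realType} (x : R) : R := (expR x + expR (- x)) / 2.
Definition tanhR {R : realType} (x : R) : R :=
  (expR x - expR (- x)) / (expR x + expR (- x)).

(* m_0(beta): largest nonnegative solution of m = tanh(beta m)
   (the solution set is nonempty (contains 0), closed and bounded by 1,
   so its supremum is its maximum). *)
Definition m0 {R : realType} (beta : R) : R :=
  sup [set m : R | 0 <= m /\ m = tanhR (beta * m)].

Definition spin {M : nat} (s : {ffun 'I_M -> bool}) (mu : 'I_M) {R : realType} : R :=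
  if s mu then 1 else -1.

(* < f(s) >_s : expectation over i.i.d. spins of mean m0(beta), with weight
   exp(beta m0 sum_mu s_mu) / (2 cosh(beta m0))^M *)
Definition avg_s {R : realType} (beta : R) (M : nat)
  (f : {ffun 'I_M -> bool} -> R) : R :=
  \sum_(s : {ffun 'I_M -> bool})
     expR (beta * m0 beta * \sum_(mu < M) spin s mu) /
       (2 * coshR (beta * m0 beta)) ^+ M * f s.

(* Main.v *)
Require Import Defs.
From HB Require Import structures.
From mathcomp Require Import all_boot all_order all_algebra.
From mathcomp Require Import all_classical all_reals all_analysis.
From mathcomp Require Import lra ring.
From mathcomp Require Import fingroup perm.
Import Order.TTheory GRing.Theory Num.Theory.
Import numFieldNormedType.Exports.
Local Open Scope classical_set_scope.
Local Open Scope ring_scope.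

Ltac fld := field; repeat (apply/andP; split); try assumption.

Section S.
Variable R : realType.

Lemma mono_from_deriv (g g' : R -> R) :
  (forall x : R, is_derive x (1:R) g (g' x)) -> (forall x : R, 0 <= x -> 0 <= g' x) ->
  forall x, 0 <= x -> g 0 <= g x.
Proof.
move=> dg pos x x0.
have der : forall y, derivable g y 1 by move=> y; exact: ex_derive.
apply: (@ger0_derive1_ndecr R g 0 x) => //.
- move=> y yi; rewrite derive1E derive_val; apply: pos.
  by move: yi; rewrite in_itv /= => /andP[/ltW].
- apply: (@derivable_within_continuous R R g `[0, x]) => y _; exact: der.
Qed.

Global Instance is_derive_expN (x : R) : is_derive x (1:R) (fun y : R => expR (- y)) (- expR (- x)).
Proof.
have e : (fun y : R => expR (- y)) = (fun y => (expR y)^-1).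
  by apply/funext => y; rewrite expRN.
rewrite e; apply: DeriveDef.
  apply: derivableV; [by rewrite expR_eq0 | exact (@derivable_expR R x)].
rewrite deriveV; [|by rewrite expR_eq0|exact (@derivable_expR R x)].
have -> : 'D_1 expR x = expR x by exact (@derive_val _ _ _ _ _ _ _ (@is_derive_expR R x)).
rewrite expRN -[_ *: _]/(_ * _) mulNr; congr (- _).
by rewrite expr2 invfM -mulrA mulVf ?mulr1 // expR_eq0.
Qed.

Definition expN : R -> R := fun y => expR (- y).

Lemma L1 (y : R) : 0 <= y -> expR y - expR (- y) <= y * (expR y + expR (- y)).
Proof.
move=> y0.
pose g : R -> R := ((@id R) * (expR + expN)) - (expR - expN).
pose g' : R -> R := fun x => x * (expR x - expR (- x)).
have dg : forall x : R, is_derive x (1:R) g (g' x).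
  move=> x; rewrite /g.
  have h1 := @is_derive_id _ R x 1.
  have h2 := @is_deriveD _ R R expR expN x 1 _ _ (is_derive_expR x) (is_derive_expN x).
  have h3 := @is_deriveM _ R (@id R) (expR + expN) x 1 _ _ h1 h2.
  have h4 := @is_deriveB _ R R expR expN x 1 _ _ (is_derive_expR x) (is_derive_expN x).
  refine (is_derive_eq (@is_deriveB _ R R _ _ x 1 _ _ h3 h4) _).
  rewrite /g' /expN /= -[_ *: _]/(_ * _) -[(_ + _) *: _]/(_ * _). 
  by rewrite opprK mulr1 addrK.
have gE : forall x, g x = x * (expR x + expR (- x)) - (expR x - expR (- x)) by [].
have := @mono_from_deriv g g' dg _ y y0.
rewrite !gE oppr0 expR0 mul0r subrr sub0r oppr0 subr_ge0 => ->//.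
move=> x x0; rewrite /g'; apply: mulr_ge0 => //; rewrite subr_ge0 ler_expR; by rewrite -subr_ge0 opprK addr_ge0.
Qed.

Lemma L2 (x : R) : 0 <= x -> 2 * x <= expR x - expR (- x).
Proof.
move=> x0.
pose g : R -> R := (expR - expN) - ( *%R 2).
pose g' : R -> R := fun x => expR x + expR (- x) - 2.
have dg : forall x : R, is_derive x (1:R) g (g' x).
  move=> z; rewrite /g.
  have h4 := @is_deriveB _ R R expR expN z 1 _ _ (is_derive_expR z) (is_derive_expN z).
  have h5 : is_derive z (1:R) ( *%R (2:R)) 2.
    refine (is_derive_eq (@is_deriveZ _ R R (@id R) 2 z 1 _ (@is_derive_id _ R z 1)) _).
    by rewrite -[_ *: _]/(_ * _) mulr1.
  refine (is_derive_eq (@is_deriveB _ R R _ _ z 1 _ _ h4 h5) _).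
  rewrite /g' /=; by rewrite opprK.
have gE : forall x, g x = expR x - expR (- x) - 2 * x by [].
have := @mono_from_deriv g g' dg _ x x0.
rewrite !gE oppr0 expR0 subrr mulr0 subrr subr_ge0 => ->//.
move=> z z0; rewrite /g' expRN.
have e0 := expR_gt0 z.
rewrite -(@ler_pM2r _ (expR z)) // mul0r !mulrDl mulVf ?gt_eqF //.
have := sqr_ge0 (expR z - 1); rewrite sqrrB1; lra.
Qed.

Lemma ge1_exp (y : R) : 0 <= y -> 1 <= expR y.
Proof. by move=> y0; have := expR_ge1Dx y; lra. Qed.

Lemma tanhE (x : R) : tanhR x = (expR (2 * x) - 1) / (expR (2 * x) + 1).
Proof.
have -> : 2 * x = x + x by lra.
rewrite /tanhR expRN expRD; have E0 := expR_gt0 x.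
set E := expR x.
have h1 : E != 0 by rewrite gt_eqF.
have h2 : E * E + 1 != 0 by rewrite gt_eqF // addr_gt0 // mulr_gt0.
have h3 : E + E^-1 != 0 by rewrite gt_eqF // addr_gt0 // invr_gt0.
by fld.
Qed.

Lemma expR2_gt0 (x : R) : 0 < expR (2 * x). Proof. exact: expR_gt0. Qed.

Lemma tanh_lt1 (x : R) : tanhR x < 1.
Proof.
rewrite tanhE; have w0 := expR2_gt0 x; set w := expR (2 * x) in w0 *.
by rewrite ltr_pdivrMr ?mul1r; lra.
Qed.

Lemma tanh_ge0 (x : R) : 0 <= x -> 0 <= tanhR x.
Proof.
move=> x0; rewrite tanhE.
have w1 : 1 <= expR (2 * x) by apply: ge1_exp; lra.
apply: divr_ge0; lra.
Qed.

Lemma tanh_le (x y : R) : x <= y -> tanhR x <= tanhR y.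
Proof.
move=> xy; rewrite !tanhE.
have w0 := expR2_gt0 x; have v0 := expR2_gt0 y.
have wv : expR (2 * x) <= expR (2 * y) by rewrite ler_expR; lra.
set w := expR (2 * x) in w0 wv *; set v := expR (2 * y) in v0 wv *.
rewrite ler_pdivrMr ?addr_gt0 // mulrAC ler_pdivlMr ?addr_gt0 //.
nra.
Qed.

Lemma tanh_diff (x e : R) : 0 <= e -> tanhR (x + e) - tanhR (x - e) <= 2 * tanhR e.
Proof.
move=> e0; rewrite !tanhE.
have -> : 2 * (x + e) = 2 * (x - e) + 2 * e + 2 * e by lra.
rewrite !expRD.
have S0 := expR2_gt0 (x - e); have Q1 : 1 <= expR (2 * e) by apply: ge1_exp; lra.
set S := expR (2 * (x - e)) in S0 *; set Q := expR (2 * e) in Q1 *.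
have d1 : S * Q * Q + 1 != 0 by rewrite gt_eqF //; nra.
have d2 : S + 1 != 0 by rewrite gt_eqF //; nra.
have d3 : Q + 1 != 0 by rewrite gt_eqF //; nra.
have -> : (S * Q * Q - 1) / (S * Q * Q + 1) - (S - 1) / (S + 1) =
  2 * S * (Q * Q - 1) / ((S * Q * Q + 1) * (S + 1)) by fld.
rewrite ler_pdivrMr; last by nra.
rewrite (_ : 2 * ((Q - 1) / (Q + 1)) * ((S * Q * Q + 1) * (S + 1)) =
   (2 * (Q - 1) * ((S * Q * Q + 1) * (S + 1))) / (Q + 1)); last by fld.
rewrite ler_pdivlMr; last by lra.
have h3 := sqr_ge0 (S * Q - 1).
have h2 : 0 <= Q - 1 by lra.
have := mulr_ge0 h2 h3.
rewrite expr2.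
nra.
Qed.

Lemma tanh_le_id (y : R) : 0 <= y -> tanhR y <= y.
Proof.
move=> y0; have := @L1 y y0; rewrite /tanhR.
have := expR_gt0 y; have := expR_gt0 (- y) => a b h.
by rewrite ler_pdivrMr ?addr_gt0.
Qed.

Lemma tanh_lt_id (u : R) : 0 < u -> tanhR u < u.
Proof.
move=> u0.
have h := @tanh_le_id _ (ltW (divr_gt0 u0 (ltr0Sn _ 1))).
move: h; rewrite !tanhE.
have -> : 2 * (u / 2) = u by fld.
have v1 : 1 < expR u by rewrite expR_gt1.
have -> : 2 * u = u + u by lra.
rewrite expRD; set v := expR u in v1 *.
rewrite ler_pdivrMr ?addr_gt0 //; last lra.
rewrite ltr_pdivrMr; last by nra.
move=> h.
have : 0 < (v - 1) ^+ 2 by rewrite exprn_gt0 // subr_gt0.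
rewrite sqrrB1 => h2.
nra.
Qed.

Lemma tanh_ge (y : R) : 0 <= y -> y / (1 + y) <= tanhR y.
Proof.
move=> y0; rewrite tanhE.
have w := expR_ge1Dx (2 * y).
have w0 := expR2_gt0 y; set e := expR (2 * y) in w w0 *.
rewrite ler_pdivrMr; last lra.
rewrite mulrAC ler_pdivlMr; last lra.
nra.
Qed.

Lemma key (a : R) : 0 < a -> a * (1 - tanhR a ^+ 2) <= tanhR a.
Proof.
move=> a0; have := @L2 _ (ltW (mulr_gt0 (ltr0Sn _ 1) a0)).
rewrite !tanhE expRN.
have w0 := expR2_gt0 a; set w := expR (2 * a) in w0 *.
move=> h.
have -> : 1 - ((w - 1) / (w + 1)) ^+ 2 = 4 * w / ((w + 1) ^+ 2).
  have w1 : w + 1 != 0 by rewrite gt_eqF //; lra.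
  by fld.
rewrite mulrA ler_pdivrMr; last by apply: exprn_gt0; lra.
have w1 : w + 1 != 0 by rewrite gt_eqF //; lra.
rewrite (_ : (w - 1) / (w + 1) * (w + 1) ^+ 2 = (w - 1) * (w + 1)); last by fld.
have : 2 * (2 * a) * w <= (w - w^-1) * w by rewrite ler_pM2r.
rewrite mulrBl mulVf ?gt_eqF //.
nra.
Qed.

Lemma cont_e2 (b : R) : continuous (fun z : R => expR (b * z)).
Proof.
move=> y; apply: (@continuous_comp _ _ _ (fun z : R => b * z) expR).
  by apply: cvgM; [exact: cvg_cst | exact: cvg_id].
exact: continuous_expR.
Qed.

Lemma tanh_cont (b : R) : continuous (fun z : R => tanhR (b * z)).
Proof.
move=> x.
have e : (fun z : R => tanhR (b * z)) =
   (fun y => (expR ((2 * b) * y) - 1) * (expR ((2 * b) * y) + 1)^-1).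
  by apply/funext => y; rewrite tanhE mulrA.
rewrite e.
apply: cvgM.
  apply: cvgB; [exact: cont_e2 | exact: cvg_cst].
apply: cvgV; first by rewrite gt_eqF // addr_gt0 // expR_gt0.
apply: cvgD; [exact: cont_e2 | exact: cvg_cst].
Qed.

Lemma fixed_exists (b : R) : 1 < b -> exists m : R, 0 < m /\ m = tanhR (b * m).
Proof.
move=> b1.
have b0 : 0 < b by lra.
pose f := fun m : R => tanhR (b * m) - m.
have fc : continuous f.
  move=> x; apply: cvgB; [exact: tanh_cont | exact: cvg_id].
pose eps := (b - 1) / (2 * b).
have eps0 : 0 < eps by apply: divr_gt0; lra.
have beps : b * eps = (b - 1) / 2 by rewrite /eps; fld; rewrite gt_eqF.
have eps1 : eps <= 1.
  rewrite /eps ler_pdivrMr; last lra.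
  lra.
have fe : 0 <= f eps.
  rewrite /f subr_ge0.
  have h := @tanh_ge (b * eps) (ltW (mulr_gt0 b0 eps0)).
  apply: le_trans h.
  rewrite beps ler_pdivlMr; last lra.
  rewrite /eps.
  have -> : (b - 1) / (2 * b) * (1 + (b - 1) / 2) = (b - 1) * (b + 1) / (4 * b).
    by fld; rewrite gt_eqF.
  rewrite ler_pdivrMr; last lra.
  nra.
have f1 : f 1 <= 0 by rewrite /f subr_le0; apply: ltW; exact: tanh_lt1.
have fw : {within `[eps, 1], continuous f} by apply: continuous_subspaceT.
have [c ci fc0] : exists2 c, c \in `[eps, 1]%R & f c = 0.
  by apply: (@IVT R f eps 1 0 eps1 fw); rewrite ge_min le_max f1 fe orbT.
exists c; split.
  by move: ci; rewrite in_itv /= => /andP[h _]; exact: lt_le_trans eps0 h.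
by move: fc0; rewrite /f => /eqP; rewrite subr_eq0 => /eqP ->.
Qed.

Lemma final (b d : R) : 0 < b -> 0 < d ->
  d <= (1 - tanhR (b * m0 b) ^+ 2) * tanhR (b * d) -> False.
Proof.
move=> b0 d0 H.
have bd0 : 0 < b * d by apply: mulr_gt0.
have T0 := @tanh_ge0 _ (ltW bd0).
have Tlt := @tanh_lt_id _ bd0.
set T := tanhR (b * d) in T0 Tlt H.
have [b1|b1] := leP b 1.
  have t2 : 0 <= tanhR (b * m0 b) ^+ 2 by apply: sqr_ge0.
  set t := tanhR (b * m0 b) ^+ 2 in t2 H.
  have : (1 - t) * T <= T by rewrite -[leRHS]mul1r ler_wpM2r //; lra.
  have : b * d <= d by rewrite -[leRHS]mul1r ler_wpM2r //; lra.
  lra.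
have [m [m_pos m_fix]] := @fixed_exists _ b1.
have ub : has_ubound [set m : R | 0 <= m /\ m = tanhR (b * m)].
  exists 1 => y [_ ->]; exact: ltW (tanh_lt1 _).
have mm0 : m <= m0 b.
  apply: (ub_le_sup ub); split; [exact: ltW | exact: m_fix].
have tt : m <= tanhR (b * m0 b).
  rewrite {1}m_fix; apply: tanh_le; rewrite ler_pM2l //.
have K := @key _ (mulr_gt0 b0 m_pos).
rewrite -m_fix in K.
have m1 : m < 1 by rewrite {1}m_fix; exact: tanh_lt1.
have hK : b * (1 - m ^+ 2) <= 1.
  rewrite -(@ler_pM2l _ m) // mulr1 mulrA [m * b]mulrC; exact: K.
have X1 : 1 - tanhR (b * m0 b) ^+ 2 <= 1 - m ^+ 2.
  rewrite lerD2l lerN2 !expr2; apply: ler_pM => //; exact: ltW.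
have step1 : (1 - tanhR (b * m0 b) ^+ 2) * T <= (1 - m ^+ 2) * T by apply: ler_wpM2r.
have pos1 : 0 < 1 - m ^+ 2 by rewrite expr2; nra.
have step2 : (1 - m ^+ 2) * T < (1 - m ^+ 2) * (b * d) by rewrite ltr_pM2l.
have step3 : (1 - m ^+ 2) * (b * d) <= d.
  rewrite mulrA [_ * b]mulrC -[leRHS]mul1r ler_wpM2r //; exact: ltW.
lra.
Qed.
End S.

Section C.
Variable R : realType.
Variable M : nat.

Definition sp (b : bool) : R := if b then 1 else -1.

Lemma sum_prod (g : 'I_M -> bool -> R) :
  \sum_(s : {ffun 'I_M -> bool}) \prod_k g k (s k) = \prod_k (g k true + g k false).
Proof.
rewrite -bigA_distr_bigA; apply: eq_bigr => k _; by rewrite big_bool.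
Qed.

Lemma prod_two (h : 'I_M -> R) (mu nu : 'I_M) : mu != nu ->
  (forall k, k != mu -> k != nu -> h k = 1) -> \prod_k h k = h mu * h nu.
Proof.
move=> mn h1; rewrite (bigD1 mu) //= (bigD1 nu) 1?eq_sym //= big1 ?mulr1 ?mulrA //.
by move=> k /andP[kn km]; apply: h1.
Qed.

Lemma W_prod (a : R) (s : {ffun 'I_M -> bool}) :
  expR (a * \sum_(k < M) spin s k) / (2 * coshR a) ^+ M =
  \prod_k (expR (a * sp (s k)) / (2 * coshR a)).
Proof.
rewrite mulr_sumr expR_sum prodf_div prodr_const card_ord.
by [].
Qed.

Lemma fsum (a : R) : expR (a * sp true) / (2 * coshR a) + expR (a * sp false) / (2 * coshR a) = 1.
Proof.
rewrite /sp /coshR mulr1 mulrN1.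
have h : expR a + expR (- a) != 0 by rewrite gt_eqF // addr_gt0 // expR_gt0.
by fld.
Qed.

Lemma fdiff (a : R) : expR (a * sp true) / (2 * coshR a) - expR (a * sp false) / (2 * coshR a) = tanhR a.
Proof.
rewrite /sp /coshR /tanhR mulr1 mulrN1.
have h : expR a + expR (- a) != 0 by rewrite gt_eqF // addr_gt0 // expR_gt0.
by fld.
Qed.

Lemma sumW (a : R) :
  \sum_(s : {ffun 'I_M -> bool}) expR (a * \sum_(k < M) spin s k) / (2 * coshR a) ^+ M = 1.
Proof.
under eq_bigr do rewrite W_prod.
rewrite (sum_prod (fun k b => expR (a * sp b) / (2 * coshR a))) big1 // => k _; exact: fsum.
Qed.

Lemma sumWss (a : R) (mu nu : 'I_M) : mu != nu ->
  \sum_(s : {ffun 'I_M -> bool}) expR (a * \sum_(k < M) spin s k) / (2 * coshR a) ^+ M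
     * (spin s mu * spin s nu) = tanhR a ^+ 2.
Proof.
move=> mn.
pose g := fun (k : 'I_M) (b : bool) =>
  expR (a * sp b) / (2 * coshR a) * (if (k == mu) || (k == nu) then sp b else 1).
transitivity (\sum_(s : {ffun 'I_M -> bool}) \prod_k g k (s k)).
  apply: eq_bigr => s _; rewrite W_prod /g [RHS]big_split /=; congr (_ * _).
  rewrite (@prod_two (fun k => if (k == mu) || (k == nu) then sp (s k) else 1) mu nu mn).
    by rewrite eqxx /= eq_sym (negbTE mn) eqxx.
  by move=> k /negbTE -> /negbTE ->.
rewrite sum_prod (@prod_two _ mu nu mn); last first.
  by move=> k /negbTE km /negbTE kn; rewrite /g km kn /= !mulr1 ?mulrN1; have := fsum a; rewrite /sp mulr1 mulrN1.
rewrite /g eqxx /= eq_sym (negbTE mn) eqxx /=. have := fdiff a; rewrite /sp !mulr1 !mulrN1 => ->; by rewrite expr2.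
Qed.
End C.

Section D.
Variable R : realType.

Lemma tanh_pair (x e : R) : e * (tanhR (x + e) - tanhR (x - e)) <= 2 * `|e| * tanhR `|e|.
Proof.
have [e0|e0] := leP 0 e.
  rewrite ger0_norm //.
  have -> : 2 * e * tanhR e = e * (2 * tanhR e) by ring.
  by apply: ler_wpM2l => //; exact: tanh_diff.
rewrite ltr0_norm //.
have e0' : 0 <= - e by rewrite oppr_ge0 ltW.
have := @tanh_diff _ x (- e) e0'.
rewrite opprK => h.
have -> : e * (tanhR (x + e) - tanhR (x - e)) = (- e) * (tanhR (x - e) - tanhR (x + e)) by ring.
have -> : 2 * - e * tanhR (- e) = (- e) * (2 * tanhR (- e)) by ring.
by apply: ler_wpM2l => //; rewrite oppr_ge0 ltW.
Qed.

Lemma term_bound (b d H H' : R) (x y : bool) : 0 < b ->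
  H - H' = (sp R x - sp R y) * d ->
  (sp R x - sp R y) * b * d * (tanhR (b * H) - tanhR (b * H'))
    <= (sp R x - sp R y) ^+ 2 * (b * `|d| * tanhR (b * `|d|)).
Proof.
move=> b0; rewrite /sp; case: x; case: y => /= hH.
- by rewrite subrr !mul0r expr0n /= mul0r.
- have eH' : H' = H - 2 * d by lra.
  have := tanh_pair (b * H - b * d) (b * d).
  rewrite eH' (_ : b * H - b * d + b * d = b * H); last lra.
  rewrite (_ : b * H - b * d - b * d = b * (H - 2 * d)); last lra.
  rewrite normrM (gtr0_norm b0) => h.
  rewrite (_ : 1 - -1 = 2 :> R); last lra.
  have -> : 2 * b * d * (tanhR (b * H) - tanhR (b * (H - 2 * d))) =
    2 * ((b * d) * (tanhR (b * H) - tanhR (b * (H - 2 * d)))) by ring.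
  have -> : (2:R) ^+ 2 * (b * `|d| * tanhR (b * `|d|)) = 2 * (2 * (b * `|d|) * tanhR (b * `|d|)).
    by ring.
  by rewrite ler_pM2l.
- have eH' : H' = H + 2 * d by lra.
  have := tanh_pair (b * H + b * d) (- (b * d)).
  rewrite eH' (_ : b * H + b * d + - (b * d) = b * H); last lra.
  rewrite (_ : b * H + b * d - - (b * d) = b * (H + 2 * d)); last lra.
  rewrite normrN normrM (gtr0_norm b0) => h.
  rewrite (_ : -1 - 1 = -2 :> R); last lra.
  have -> : -2 * b * d * (tanhR (b * H) - tanhR (b * (H + 2 * d))) =
    2 * (- (b * d) * (tanhR (b * H) - tanhR (b * (H + 2 * d)))) by ring.
  have -> : (-2:R) ^+ 2 * (b * `|d| * tanhR (b * `|d|)) = 2 * (2 * (b * `|d|) * tanhR (b * `|d|)).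
    by ring.
  by rewrite ler_pM2l.
- by rewrite subrr !mul0r expr0n /= mul0r.
Qed.
End D.

Lemma sum_two (R : realType) (M : nat) (h : 'I_M -> R) (mu nu : 'I_M) : mu != nu ->
  (forall k, k != mu -> k != nu -> h k = 0) -> \sum_k h k = h mu + h nu.
Proof.
move=> mn h1; rewrite (bigD1 mu) //= (bigD1 nu) 1?eq_sym //= big1 ?addr0 ?addrA //.
by move=> k /andP[kn km]; apply: h1.
Qed.

Theorem mainTheorem3 (R : realType) (beta : R) (M : nat) (p : 'I_M -> R) :
  0 < beta -> (1 <= M)%N ->
  (forall mu : 'I_M,
     p mu = avg_s beta (fun s => spin s mu *
              tanhR (beta * \sum_(nu < M) spin s nu * p nu))) ->
  forall mu nu : 'I_M, p mu = p nu.
Proof.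
move=> b0 _ Hp mu nu.
case: (eqVneq mu nu) => [-> // | mn].
apply/eqP; rewrite -subr_eq0; apply/eqP.
set d := p mu - p nu.
set a := beta * m0 beta.
pose W := fun s : {ffun 'I_M -> bool} => expR (a * \sum_(k < M) spin s k) / (2 * coshR a) ^+ M.
pose h := fun s : {ffun 'I_M -> bool} => \sum_(k < M) spin s k * p k.
pose T := fun s => tanhR (beta * h s).
pose tau := fun s : {ffun 'I_M -> bool} => [ffun k => s (tperm mu nu k)].
have Hp' : forall k, p k = \sum_s W s * (spin s k * T s) by move=> k; rewrite {1}Hp.
have W0 : forall s, 0 <= W s.
  by move=> s; rewrite /W divr_ge0 ?expR_ge0 // exprn_ge0 // /coshR mulr_ge0 // divr_ge0 // addr_ge0 // expR_ge0.
have tauK : involutive tau by move=> s; apply/ffunP => k; rewrite /tau !ffunE tpermK.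
have tau_inj : injective tau := inv_inj tauK.
have sp_mu : forall s, spin (tau s) mu = spin s nu :> R.
  by move=> s; rewrite /spin /tau ffunE tpermL.
have sp_nu : forall s, spin (tau s) nu = spin s mu :> R by move=> s; rewrite /spin /tau ffunE tpermR.
have Wtau : forall s, W (tau s) = W s.
  move=> s; rewrite /W; congr (expR (a * _) / _).
  rewrite (reindex_inj (@perm_inj _ (tperm mu nu))) /=.
  by apply: eq_bigr => k _; rewrite /spin /tau ffunE tpermK.
have htau : forall s, h s - h (tau s) = (spin s mu - spin s nu) * d.
  move=> s; rewrite /h.
  rewrite [X in _ - X](reindex_inj (@perm_inj _ (tperm mu nu))) /=.
  under [X in _ - X]eq_bigr do rewrite /spin /tau ffunE tpermK -/(spin s _).
  rewrite -sumrB (@sum_two _ _ _ mu nu mn).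
    by rewrite tpermL tpermR /d; ring.
  by move=> k km kn; rewrite tpermD 1?eq_sym // subrr.
have dE : d = \sum_s W s * ((spin s mu - spin s nu) * T s).
  rewrite /d (Hp' mu) (Hp' nu) -sumrB; apply: eq_bigr => s _; ring.
have dE' : d = \sum_s W s * ((spin s nu - spin s mu) * T (tau s)).
  rewrite {1}dE (reindex_inj tau_inj) /=; apply: eq_bigr => s _.
  by rewrite Wtau sp_mu sp_nu.
have d2 : 2 * beta * d ^+ 2 =
   \sum_s W s * ((spin s mu - spin s nu) * beta * d * (T s - T (tau s))).
  have -> : 2 * beta * d ^+ 2 = beta * d * (d + d) by ring.
  rewrite {2}dE {2}dE' -big_split mulr_sumr; apply: eq_bigr => s _ /=; ring.
pose K := beta * `|d| * tanhR (beta * `|d|).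
have bnd : 2 * beta * d ^+ 2 <= K * (2 - 2 * tanhR a ^+ 2).
  rewrite d2.
  apply: (@le_trans _ _ (\sum_s W s * ((spin s mu - spin s nu) ^+ 2 * K))).
    apply: ler_sum => s _; apply: ler_wpM2l; first exact: W0.
    exact: (@term_bound R beta d (h s) (h (tau s)) (s mu) (s nu) b0 (htau s)).
  have -> : \sum_s W s * ((spin s mu - spin s nu) ^+ 2 * K) =
     K * (2 * \sum_s W s - 2 * \sum_s W s * (spin s mu * spin s nu)).
    rewrite !mulr_sumr -sumrB mulr_sumr; apply: eq_bigr => s _.
    have e1 : spin s mu ^+ 2 = 1 :> R by rewrite /spin; case: (s mu); rewrite ?expr1n ?sqrrN ?expr1n.
    have e2 : spin s nu ^+ 2 = 1 :> R by rewrite /spin; case: (s nu); rewrite ?expr1n ?sqrrN ?expr1n.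
    rewrite sqrrB e1 e2; ring.
  by rewrite /W (@sumW R M a) (@sumWss R M a mu nu mn) mulr1.
have [d0|dn0] := eqVneq d 0; first by [].
exfalso.
have ad : 0 < `|d| by rewrite normr_gt0.
apply: (@final R beta `|d| b0 ad).
rewrite -/a.
have : 2 * beta * `|d| * `|d| <= 2 * beta * `|d| * ((1 - tanhR a ^+ 2) * tanhR (beta * `|d|)).
  have -> : 2 * beta * `|d| * `|d| = 2 * beta * d ^+ 2 by rewrite -(real_normK (num_real d)); ring.
  apply: (le_trans bnd); rewrite /K; rewrite le_eqVlt; apply/orP; left; apply/eqP; ring.
rewrite ler_pM2l //; apply: mulr_gt0 => //; apply: mulr_gt0 => //.
Qed.
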